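(* Let $q\ge8$ be even and $\mu\in\mathbb F_q^*\setminus\{1\}$. The points $\mathbf P(1,0,1,0)$ and $\mathbf P(0,\mu,0,1)$ of $\ell_\mu$ lie on the tangents $\mathcal T_1$ and $\mathcal T_{\sqrt\mu}$, respectively, and no other point of $\ell_\mu$ is a $T$-point. Consequently, for the $G_q$-orbit $\mathcal O_\mu$ of $\ell_\mu$, the number of $T$-points on each line of $\mathcal O_\mu$ is $P_T=2$.
   Context: In $\mathrm{PG}(3,q)$ with points $\mathbf P(x_0,x_1,x_2,x_3)$, put $P(t)=\mathbf P(t^3,t^2,t,1)$ for $t\in\mathbb F_q$ and $P(\infty)=\mathbf P(1,0,0,0)$; the twisted cubic is $\mathcal C=\{P(t)\}$ and $G_q$ is the group of projectivities fixing $\mathcal C$. The tangent $\mathcal T_t$ at $P(t)$, $t\in\mathbb F_q$, is the line through $P(t)$ and $\mathbf P(3t^2,2t,1,0)$; $\mathcal T_\infty$ is the line through $\mathbf P(1,0,0,0),\mathbf P(0,1,0,0)$. $T$-points are points off $\mathcal C$ on a tangent. $\ell_\mu$ is the line through $\mathbf P(0,\mu,0,1)$ and $\mathbf P(1,0,1,0)$; $\sqrt\mu$ is the unique square root of $\mu$ in $\mathbb F_q$. *)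

(* Defs.v *)
(* PG(3,q) over a finite field F; projective points are
   represented by their (canonical) row spaces <<v>>%MS : 'M[F]_4. *)
From HB Require Import structures.
From mathcomp Require Import all_boot all_order all_algebra.
Set Implicit Arguments. Unset Strict Implicit. Unset Printing Implicit Defensive.
Import GRing.Theory.
Local Open Scope ring_scope.

Section PG3.
Variable F : finFieldType.

Definition vec4 (a b c d : F) : 'rV[F]_4 := \row_(i < 4) nth 0 [:: a; b; c; d] i.

Definition pt (v : 'rV[F]_4) : 'M[F]_4 := (<<v>>)%MS.

Definition PGpoints : {set 'M[F]_4} := [set pt v | v in [set v : 'rV[F]_4 | v != 0]].

(* parameters t in F ∪ {∞}: Some t = t, None = ∞ *)
Definition Cvec (t : option F) : 'rV[F]_4 :=
  match t with
  | Some t => vec4 (t ^+ 3) (t ^+ 2) t 1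
  | None => vec4 1 0 0 0
  end.

Definition curve : {set 'M[F]_4} := [set pt (Cvec t) | t : option F].

Definition Tvec (t : option F) : 'rV[F]_4 :=
  match t with
  | Some t => vec4 (3%:R * t ^+ 2) (2%:R * t) 1 0
  | None => vec4 0 1 0 0
  end.

Definition tangent (t : option F) : 'M[F]_(2, 4) := col_mx (Cvec t) (Tvec t).

Definition Tpoint (X : 'M[F]_4) : bool :=
  [&& X \in PGpoints, X \notin curve & [exists t : option F, (X <= tangent t)%MS]].

Definition ell (mu : F) : 'M[F]_(2, 4) := col_mx (vec4 0 mu 0 1) (vec4 1 0 1 0).

Definition Gq : {set 'M[F]_4} :=
  [set A : 'M[F]_4 | (A \in unitmx) && ([set pt (Cvec t *m A) | t : option F] == curve)].

Definition nTpoints (L : 'M[F]_(2, 4)) : nat :=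
  #|[set X in PGpoints | (X <= L)%MS && Tpoint X]|.

End PG3.

(* Main.v *)
Require Import Defs.
From HB Require Import structures.
From mathcomp Require Import all_boot all_order all_algebra.
From mathcomp Require Import ring zify.
Import GRing.Theory.
Local Open Scope ring_scope.

Section Aux.
Variable F : finFieldType.
Hypothesis two0 : (2%:R : F) = 0.

Lemma three1 : (3%:R : F) = 1.
Proof. by rewrite (natrD _ 2 1) two0 add0r. Qed.

Lemma lin2 (x y h1 h2 c1 c2 z : F) : h1 = 0 -> h2 = 0 ->
  x - y = c1 * h1 + c2 * h2 + 2%:R * z -> x = y.
Proof.
move=> -> -> e; apply/eqP; rewrite -subr_eq0 e two0; apply/eqP; ring.
Qed.

Definition cf (v : 'rV[F]_4) (k : nat) : F := v 0 (inord k).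

Lemma cf_vec4_0 a b c d : cf (vec4 a b c d) 0 = a. Proof. by rewrite /cf !mxE !inordK. Qed.
Lemma cf_vec4_1 a b c d : cf (vec4 a b c d) 1 = b. Proof. by rewrite /cf !mxE !inordK. Qed.
Lemma cf_vec4_2 a b c d : cf (vec4 a b c d) 2 = c. Proof. by rewrite /cf !mxE !inordK. Qed.
Lemma cf_vec4_3 a b c d : cf (vec4 a b c d) 3 = d. Proof. by rewrite /cf !mxE !inordK. Qed.
Definition cf_vec4 := (cf_vec4_0, cf_vec4_1, cf_vec4_2, cf_vec4_3).

Lemma cfD v w k : cf (v + w) k = cf v k + cf w k.
Proof. by rewrite /cf mxE. Qed.
Lemma cfZ a v k : cf (a *: v) k = a * cf v k.
Proof. by rewrite /cf mxE. Qed.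
Lemma cf0 k : cf 0 k = 0.
Proof. by rewrite /cf mxE. Qed.

Lemma rowP4 (v w : 'rV[F]_4) : cf v 0 = cf w 0 -> cf v 1 = cf w 1 ->
  cf v 2 = cf w 2 -> cf v 3 = cf w 3 -> v = w.
Proof.
move=> e0 e1 e2 e3; apply/rowP => i.
have -> : i = inord i by rewrite inord_val.
case: i => [[|[|[|[|i]]]] Hi] //=.
Qed.

Definition Qf (a b c d : nat) (v : 'rV[F]_4) := cf v a * cf v b - cf v c * cf v d.
Definition Bf (a b c d : nat) (v w : 'rV[F]_4) :=
  cf v a * cf w b + cf w a * cf v b - (cf v c * cf w d + cf w c * cf v d).


Lemma cfCvec (t : option F) :
  match t with
  | Some t0 => [/\ cf (Cvec t) 0 = t0^+3, cf (Cvec t) 1 = t0^+2, cf (Cvec t) 2 = t0 & cf (Cvec t) 3 = 1]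
  | None => [/\ cf (Cvec t) 0 = 1, cf (Cvec t) 1 = 0, cf (Cvec t) 2 = 0 & cf (Cvec t) 3 = 0]
  end.
Proof. by case: t => [t|]; rewrite /= !cf_vec4. Qed.

Lemma in_span (v c d : 'rV[F]_4) a b : v = a *: c + b *: d -> (v <= col_mx c d)%MS.
Proof.
have := submx_refl (col_mx c d); rewrite col_mx_sub => /andP [hc hd] ->.
by apply: addmx_sub; apply: scalemx_sub.
Qed.

Lemma sub_col2 (v c d : 'rV[F]_4) : (v <= col_mx c d)%MS -> exists a b, v = a *: c + b *: d.
Proof.
rewrite -addsmxE => /sub_addsmxP [[u1 u2] /= ->]; exists (u1 0 0), (u2 0 0).
by rewrite {1}[u1]mx11_scalar {1}[u2]mx11_scalar !mul_scalar_mx.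
Qed.

Lemma Cvec_neq0 (t : option F) : Cvec t != 0.
Proof.
apply/eqP => h; have := cfCvec t; case: t h => [t|] h; rewrite h !cf0.
  by case=> _ _ _ /esym/eqP; rewrite oner_eq0.
by case=> /esym/eqP; rewrite oner_eq0.
Qed.

Lemma linalg (s : option F) w : Bf 0 2 1 1 (Cvec s) w = 0 -> Bf 1 3 2 2 (Cvec s) w = 0 ->
  Bf 0 3 1 2 (Cvec s) w = 0 -> (w <= tangent s)%MS.
Proof.
rewrite /Bf; have := cfCvec s; case: s => [s|] [-> -> -> ->] H1 H2 H3.
  apply: (@in_span _ _ _ (cf w 3) (cf w 2 + s * cf w 3)).
  apply: rowP4; rewrite cfD !cfZ /= !cf_vec4.
  - apply: (lin2 _ _ _ _ (s) (1) (-3%:R * s^+3 * cf w 3) H2 H3); ring.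
  - apply: (lin2 _ _ _ _ (1) (0) (-2%:R * s^+2 * cf w 3) H2 H3); ring.
  - apply: (lin2 _ _ _ _ (0) (0) (- s * cf w 3) H2 H3); ring.
  - ring.
apply: (@in_span _ _ _ (cf w 0) (cf w 1)).
apply: rowP4; rewrite cfD !cfZ /= !cf_vec4.
- ring.
- ring.
- apply: (lin2 _ _ _ _ (1) (0) (0) H1 H3); ring.
- apply: (lin2 _ _ _ _ (0) (1) (0) H1 H3); ring.
Qed.


Definition gam (t : option F) (k : nat) : 'rV[F]_4 :=
  match t with
  | Some t0 => nth 0 [:: Cvec t; Tvec t; vec4 (3%:R * t0) 1 0 0; vec4 1 0 0 0] k
  | None => nth 0 [:: vec4 1 0 0 0; vec4 0 1 0 0; vec4 0 0 1 0; vec4 0 0 0 1] k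
  end.

Definition gsum (t : option F) (u : F) := \sum_(k < 4) u ^+ k *: gam t k.

Lemma gam_curve (t : option F) u : exists a (s : option F), gsum t u = a *: Cvec s.
Proof.
rewrite /gsum !big_ord_recr big_ord0 /= add0r.
case: t => [t|].
  exists 1, (Some (t + u)); rewrite scale1r.
  by apply: rowP4; rewrite /= !cfD !cfZ !cf_vec4; ring.
have [->|hu] := eqVneq u 0.
  exists 1, None; rewrite scale1r.
  by apply: rowP4; rewrite /= !cfD !cfZ !cf_vec4 ?expr0n /=; ring.
exists (u ^+ 3), (Some u^-1).
apply: rowP4; rewrite /= !cfD !cfZ !cf_vec4; by field; rewrite ?hu.
Qed.

Definition Phi (t : option F) (A : 'M[F]_4) (j : nat) : {poly F} :=
  \poly_(k < 4) cf (gam t k *m A) j.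

Lemma Phi_horner t A j u : (Phi t A j).[u] = cf (gsum t u *m A) j.
Proof.
rewrite horner_poly /gsum mulmx_suml /cf summxE; apply: eq_big => // k _.
by rewrite -scalemxAl [RHS]mxE mulrC.
Qed.

Definition Qpoly t A (a b c d : nat) := Phi t A a * Phi t A b - Phi t A c * Phi t A d.

Lemma coefM1 (p q : {poly F}) : (p * q)`_1 = p`_0 * q`_1 + p`_1 * q`_0.
Proof. by rewrite coefM !big_ord_recr big_ord0 /= add0r. Qed.

Lemma Qpoly_coef1 t A a b c d :
  (Qpoly t A a b c d)`_1 = Bf a b c d (gam t 0 *m A) (gam t 1 *m A).
Proof. by rewrite /Qpoly coefB !coefM1 /Phi !coef_poly /=. Qed.

Lemma Qpoly_horner t A a b c d u :
  (Qpoly t A a b c d).[u] = Qf a b c d (gsum t u *m A).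
Proof. by rewrite /Qpoly hornerD hornerN !hornerM !Phi_horner. Qed.

Lemma size_Qpoly t A a b c d : (size (Qpoly t A a b c d) <= 7)%N.
Proof.
rewrite /Qpoly; apply: leq_trans (size_polyD _ _) _; rewrite size_polyN geq_max.
have h (p q : nat) : (size (Phi t A p * Phi t A q)%R <= 7)%N.
  apply: leq_trans (size_polyMleq _ _) _.
  have := size_poly 4 (fun k => cf (gam t k *m A) p).
  have := size_poly 4 (fun k => cf (gam t k *m A) q).
  rewrite /Phi; lia.
by rewrite !h.
Qed.

Hypothesis hq : (8 <= #|F|)%N.

Lemma Qpoly_eq0 t A a b c d : (forall u, Qf a b c d (gsum t u *m A) = 0) ->
  Qpoly t A a b c d = 0.
Proof.
move=> H; apply/eqP; apply/negPn/negP => nz.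
have := max_poly_roots nz (rs := enum F).
rewrite enum_uniq -cardT => /(_ _ isT).
have -> : all (root (Qpoly t A a b c d)) (enum F).
  by apply/allP => u _; rewrite /root Qpoly_horner H.
move=> /(_ isT) lt; have := leq_trans lt (size_Qpoly t A a b c d).
by move=> /(leq_trans hq).
Qed.


Lemma QfZ a b c d x v : Qf a b c d (x *: v) = x ^+ 2 * Qf a b c d v.
Proof. rewrite /Qf !cfZ; ring. Qed.
Lemma BfZ a b c d x v w : Bf a b c d (x *: v) w = x * Bf a b c d v w.
Proof. rewrite /Bf !cfZ; ring. Qed.

Lemma Qf1 (s : option F) : Qf 0 2 1 1 (Cvec s) = 0.
Proof. rewrite /Qf; have := cfCvec s; case: s => [s|] [e0 e1 e2 e3]; rewrite ?e0 ?e1 ?e2 ?e3; ring. Qed.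
Lemma Qf2 (s : option F) : Qf 1 3 2 2 (Cvec s) = 0.
Proof. rewrite /Qf; have := cfCvec s; case: s => [s|] [e0 e1 e2 e3]; rewrite ?e0 ?e1 ?e2 ?e3; ring. Qed.
Lemma Qf3 (s : option F) : Qf 0 3 1 2 (Cvec s) = 0.
Proof. rewrite /Qf; have := cfCvec s; case: s => [s|] [e0 e1 e2 e3]; rewrite ?e0 ?e1 ?e2 ?e3; ring. Qed.

Definition curve_map (A : 'M[F]_4) :=
  forall s : option F, exists x (s' : option F), Cvec s *m A = x *: Cvec s'.

Lemma Bf_zero A (HA : curve_map A) t a b c d
  (hQ : forall s : option F, Qf a b c d (Cvec s) = 0) :
  Bf a b c d (gam t 0 *m A) (gam t 1 *m A) = 0.
Proof.
rewrite -Qpoly_coef1 (Qpoly_eq0 t A a b c d); first by rewrite coef0.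
move=> u; have [x [s ->]] := gam_curve t u; rewrite -scalemxAl.
by have [y [s' ->]] := HA s; rewrite !QfZ hQ !mulr0.
Qed.

Lemma tangent_map A (Au : A \in unitmx) (HA : curve_map A) (t : option F) :
  exists t' : option F, (tangent t *m A <= tangent t')%MS.
Proof.
have [x [t' ex]] := HA t; exists t'.
have x0 : x != 0.
  apply/eqP => x0; move: ex; rewrite x0 scale0r => /(congr1 (mulmx^~ (invmx A))).
  by rewrite mulmxK // mul0mx; apply/eqP; exact: Cvec_neq0.
have g0 : gam t 0 = Cvec t by case: t {ex}.
have g1 : gam t 1 = Tvec t by case: t {ex g0}.
rewrite /tangent (mul_col_mx (Cvec t) (Tvec t)) (@col_mx_sub _ 1 1 4); apply/andP; split.
  rewrite ex; apply: scalemx_sub.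
  by have := submx_refl (tangent t'); rewrite (@col_mx_sub _ 1 1 4) => /andP[].
have h a b c d (hQ : forall s : option F, Qf a b c d (Cvec s) = 0) :
    Bf a b c d (Cvec t') (Tvec t *m A) = 0.
  have := @Bf_zero A HA t a b c d hQ; rewrite g0 g1 ex BfZ => /eqP.
  by rewrite mulf_eq0 (negbTE x0) /= => /eqP.
by apply: linalg; apply: h; [exact: Qf1 | exact: Qf2 | exact: Qf3].
Qed.


Lemma pt_sub (v : 'rV[F]_4) m (M : 'M[F]_(m, 4)) : (pt v <= M)%MS = (v <= M)%MS.
Proof. by rewrite /pt genmxE. Qed.

Lemma pt_eq_scale (v w : 'rV[F]_4) : pt v = pt w -> exists a, v = a *: w.
Proof.
move=> e; have : (pt w <= w)%MS by rewrite pt_sub.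
by rewrite -e pt_sub => /sub_rVP.
Qed.

Lemma ptZ a (v : 'rV[F]_4) : a != 0 -> pt (a *: v) = pt v.
Proof. by move=> a0; rewrite /pt; apply: eq_genmx; exact: eqmx_scale. Qed.

Lemma pt_mulmx (v w : 'rV[F]_4) (A : 'M[F]_4) : pt v = pt w -> pt (v *m A) = pt (w *m A).
Proof. by rewrite /pt => /genmxP/eqmxP e; apply/genmxP/eqmxP; exact: eqmxMr. Qed.

Lemma inPG (v : 'rV[F]_4) : v != 0 -> pt v \in PGpoints F.
Proof. by move=> v0; apply/imsetP; exists v; rewrite ?inE. Qed.

Lemma PGP X : X \in PGpoints F -> exists2 v : 'rV[F]_4, v != 0 & X = pt v.
Proof. by case/imsetP => v; rewrite inE => v0 ->; exists v. Qed.

Lemma ell_T (mu : F) (mu1 : mu != 1) X : X \in PGpoints F -> (X <= ell mu)%MS -> Tpoint X ->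
  X = pt (vec4 1 0 1 0) \/ X = pt (vec4 0 mu 0 1).
Proof.
move=> hP hL /and3P [_ _ /existsP [t ht]].
have [v v0 eX] := PGP _ hP; subst X.
move: hL ht; rewrite !pt_sub /ell /tangent => /sub_col2 [al [be ev]] /sub_col2 [ga [de ev2]].
have E := etrans (esym ev) ev2.
have e0 := congr1 (cf^~ 0%N) E; have e1 := congr1 (cf^~ 1%N) E.
have e2 := congr1 (cf^~ 2%N) E; have e3 := congr1 (cf^~ 3%N) E.
move: e0 e1 e2 e3; case: t {ev2 E} => [t|] /=; rewrite !cfD !cfZ !cf_vec4 ?two0 ?three1;
  rewrite ?mulr0 ?mulr1 ?mul0r ?mul1r ?add0r ?addr0 => e0 e1 e2 e3.
  subst ga.
  have [al0|al0] := eqVneq al 0.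
    left; move: ev; rewrite al0 scale0r add0r => ev.
    have be0 : be != 0 by apply: contraNneq v0 => b0; rewrite ev b0 scale0r.
    by rewrite ev ptZ.
  right; have hmu : mu = t ^+ 2.
    by apply: (mulfI al0); rewrite e1 mulr0 addr0.
  have be0 : be = 0.
    have : be * (1 - mu) = 0.
      rewrite hmu.
      transitivity (- (al * t ^+ 3 + de * t ^+ 2 - be) + t ^+ 2 * (al * t + de - be)); first ring.
      by rewrite -e0 -e2 !subrr oppr0 mulr0 addr0.
    by move/eqP; rewrite mulf_eq0 subr_eq0 [1 == _]eq_sym (negbTE mu1) orbF => /eqP.
  by move: ev; rewrite be0 scale0r addr0 => ev; rewrite ev ptZ.
by move: v0; rewrite ev e2 e3 !scale0r addr0 eqxx.
Qed.



Lemma Gq_maps A : A \in Gq F -> [/\ A \in unitmx, curve_map A & curve_map (invmx A)].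
Proof.
rewrite inE => /andP [Au /eqP E]; split => // s.
  have : pt (Cvec s *m A) \in curve F by rewrite -E; apply/imsetP; exists s.
  case/imsetP => s' _ e; have [a ea] := pt_eq_scale _ _ e; by exists a, s'.
have : pt (Cvec s) \in curve F by apply/imsetP; exists s.
rewrite -E => /imsetP [s' _ e]; have [a ea] := pt_eq_scale _ _ e.
by exists a, s'; rewrite ea -scalemxAl mulmxK.
Qed.

Lemma Tpoint_map A (Au : A \in unitmx) (HA : curve_map A) (HAi : curve_map (invmx A))
  (v : 'rV[F]_4) : Tpoint (pt v) -> Tpoint (pt (v *m A)).
Proof.
case/and3P => hP hC /existsP [t ht].
have [w w0 ew] := PGP _ hP.
have v0 : v != 0.
  apply: contraNneq w0 => v0; have [a ea] := pt_eq_scale _ _ (esym ew).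
  by rewrite ea v0 scaler0.
apply/and3P; split.
- apply: inPG; apply: contraNneq v0 => h.
  by rewrite -(mulmxK Au v) h mul0mx.
- apply/negP => /imsetP [s _ e]; have [a ea] := pt_eq_scale _ _ e.
  have [b [s' eb]] := HAi s.
  have ev : v = (a * b) *: Cvec s'.
    by rewrite -(mulmxK Au v) ea -scalemxAl eb scalerA.
  have ab0 : a * b != 0 by apply: contraNneq v0 => h; rewrite ev h scale0r.
  move/negP: hC; apply; apply/imsetP; exists s' => //.
  by rewrite ev ptZ.
- apply/existsP; have [t' ht'] := tangent_map _ Au HA t; exists t'.
  rewrite pt_sub; apply: submx_trans ht'; apply: submxMr.
  by rewrite -pt_sub.
Qed.

End Aux.

Theorem lemma6p1 (F : finFieldType) (hchar : 2%N \in [pchar F]) (hq : (8 <= #|F|)%N)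
  (mu : F) (mu0 : mu != 0) (mu1 : mu != 1) (s : F) (hs : s ^+ 2 = mu) :
  [/\ (pt (vec4 (1 : F) 0 1 0) <= tangent (Some (1 : F)))%MS,
      (pt (vec4 0 mu 0 1) <= tangent (Some s))%MS,
      (forall X : 'M[F]_4, X \in PGpoints F -> (X <= ell mu)%MS -> Tpoint X ->
         X = pt (vec4 1 0 1 0) \/ X = pt (vec4 0 mu 0 1))
    & (forall A : 'M[F]_4, A \in Gq F -> nTpoints (ell mu *m A) = 2%N)].
Proof.
have two0 : (2%:R : F) = 0 := pcharf0 hchar.
have part1 : (pt (vec4 (1 : F) 0 1 0) <= tangent (Some (1 : F)))%MS.
  rewrite pt_sub; apply: (in_span _ _ _ _ 0 1); apply: rowP4;
  by rewrite /= !cfD !cfZ !cf_vec4 ?two0 ?(three1 _ two0); ring.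
have hs0 : s ^+ 2 - mu = 0 by rewrite hs subrr.
have part2 : (pt (vec4 0 mu 0 1) <= tangent (Some s))%MS.
  rewrite pt_sub; apply: (in_span _ _ _ _ 1 s); apply: rowP4; rewrite /= !cfD !cfZ !cf_vec4.
  - apply: (lin2 _ two0 _ _ _ _ 0 0 (- 2%:R * s ^+ 3) hs0 (erefl (0 : F))); ring.
  - apply: (lin2 _ two0 _ _ _ _ (-1) 0 (- s ^+ 2) hs0 (erefl (0 : F))); ring.
  - apply: (lin2 _ two0 _ _ _ _ 0 0 (- s) hs0 (erefl (0 : F))); ring.
  - ring.
have nz1 : vec4 (1 : F) 0 1 0 != 0.
  apply/eqP => h; have := congr1 (fun z => cf _ z 0%N) h; rewrite cf_vec4 cf0; apply/eqP; exact: oner_neq0.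
have nz2 : vec4 (0 : F) mu 0 1 != 0.
  apply/eqP => h; have := congr1 (fun z => cf _ z 3%N) h; rewrite cf_vec4 cf0; apply/eqP; exact: oner_neq0.
have T1 : Tpoint (pt (vec4 (1 : F) 0 1 0)).
  apply/and3P; split; first exact: inPG.
    apply/negP => /imsetP [t _ e]; have [a ea] := pt_eq_scale _ _ _ e.
    have e0 := congr1 (fun z => cf _ z 0%N) ea; have e2 := congr1 (fun z => cf _ z 2%N) ea; have e3 := congr1 (fun z => cf _ z 3%N) ea.
    move: e0 e2 e3; case: t {e ea} => [t|] /=; rewrite !cfZ !cf_vec4.
      by move=> e0 _ /esym/eqP; rewrite mulr1 => /eqP a0; move: e0; rewrite a0 mul0r; apply/eqP; exact: oner_neq0.
    by move=> _ ; rewrite mulr0; move/eqP; rewrite oner_eq0.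
  by apply/existsP; exists (Some 1).
have T2 : Tpoint (pt (vec4 (0 : F) mu 0 1)).
  apply/and3P; split; first exact: inPG.
    apply/negP => /imsetP [t _ e]; have [a ea] := pt_eq_scale _ _ _ e.
    have e1 := congr1 (fun z => cf _ z 1%N) ea; have e2 := congr1 (fun z => cf _ z 2%N) ea; have e3 := congr1 (fun z => cf _ z 3%N) ea.
    move: e1 e2 e3; case: t {e ea} => [t|] /=; rewrite !cfZ !cf_vec4.
      rewrite mulr1 => e1 e2 a1; move: e2 e1; rewrite -a1 mul1r => <-.
      by rewrite expr0n mulr0 => /eqP; rewrite (negbTE mu0).
    by move=> _ _; rewrite mulr0; move/eqP; rewrite oner_eq0.
  by apply/existsP; exists (Some s).
split => //.
  by move=> X; apply: ell_T.
move=> A /Gq_maps [Au HA HAi].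
have Aiu : invmx A \in unitmx by rewrite unitmx_inv.
have HAii : curve_map F (invmx (invmx A)) by rewrite invmxK.
have TM := Tpoint_map _ two0 hq _ Au HA HAi.
have TMi := Tpoint_map _ two0 hq _ Aiu HAi HAii.
have subL (v : 'rV[F]_4) : (v <= ell mu)%MS -> (pt (v *m A) <= ell mu *m A)%MS.
  by move=> h; rewrite pt_sub; apply: submxMr.
have sub1 : (vec4 (1 : F) 0 1 0 <= ell mu)%MS.
  by have := submx_refl (ell mu); rewrite /ell (@col_mx_sub _ 1 1 4) => /andP [].
have sub2 : (vec4 (0 : F) mu 0 1 <= ell mu)%MS.
  by have := submx_refl (ell mu); rewrite /ell (@col_mx_sub _ 1 1 4) => /andP [].
have nzA (v : 'rV[F]_4) : v != 0 -> v *m A != 0.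
  by move=> v0; apply: contraNneq v0 => h; rewrite -(mulmxK Au v) h mul0mx.
have key : [set X in PGpoints F | (X <= ell mu *m A)%MS && Tpoint X] =
    [set pt (vec4 (1 : F) 0 1 0 *m A); pt (vec4 (0 : F) mu 0 1 *m A)].
  apply/setP => X; rewrite !inE; apply/idP/idP.
    case/andP => hP /andP [hL hT]; have [v v0 eX] := PGP _ _ hP; subst X.
    have vw : v = (v *m invmx A) *m A by rewrite mulmxKV.
    have hTw : Tpoint (pt (v *m invmx A)) by apply: TMi.
    have hPw : pt (v *m invmx A) \in PGpoints F by case/and3P: hTw.
    have hLw : (pt (v *m invmx A) <= ell mu)%MS.
      rewrite pt_sub; move: hL; rewrite pt_sub => /(submxMr (invmx A)).
      by rewrite mulmxK.
    case: (ell_T _ two0 _ mu1 _ hPw hLw hTw) => e; rewrite vw (pt_mulmx _ _ _ A e) eqxx ?orbT //.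
  case/orP => /eqP ->.
    by rewrite inPG ?nzA // subL // TM.
  by rewrite inPG ?nzA // subL // TM.
rewrite /nTpoints key cards2.
suff -> : (pt (vec4 (1 : F) 0 1 0 *m A) != pt (vec4 (0 : F) mu 0 1 *m A)) by [].
apply/eqP => e; have := pt_mulmx _ _ _ (invmx A) e; rewrite !mulmxK // => e'.
have [a ea] := pt_eq_scale _ _ _ e'.
have := congr1 (fun z => cf _ z 0%N) ea; rewrite cfZ !cf_vec4 mulr0.
by move/eqP; rewrite oner_eq0.
Qed.
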